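(* Let $\lambda$ be a partition with $d(\lambda)\ge3$, let $\ell=d(\lambda)-3$ and $A=\mathcal{L}(\lambda)$. Then $\mathbb{SG}(A)=\mathbb{SG}(A[\ell,\ell])$.
   Context: A partition is a finite non-increasing sequence $\lambda=(\lambda_1,\dots,\lambda_r)$ of positive integers; $()$ is the empty partition. Durfee length: $d(\lambda)=\max\{k:\lambda_k\ge k\}$. For non-negative $i,j$, $\lambda[i,j]$ is $(\lambda_{i+1}-j,\dots,\lambda_r-j)$ with all non-positive entries removed. LCTR: positions $\mathcal{L}(\mu)$; if $\mu\neq()$ the two moves go to $\mathcal{L}(\mu[1,0])$ and $\mathcal{L}(\mu[0,1])$; $\mathcal{L}(())$ is terminal. For $A=\mathcal{L}(\lambda)$, $A[i,j]=\mathcal{L}(\lambda[i,j])$. Normal play; $\mathbb{SG}(A)=\operatorname{mex}\{\mathbb{SG}(B):A\to B\}$. *)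

(* Defs.v *)
From mathcomp Require Import all_boot.
Set Implicit Arguments. Unset Strict Implicit. Unset Printing Implicit Defensive.

Definition is_partition (l : seq nat) : bool :=
  sorted geq l && all (fun x => 0 < x) l.

(* lambda_k, 1-indexed (0 beyond the length). *)
Definition part (l : seq nat) (k : nat) : nat := nth 0 l k.-1.

Definition durfee (l : seq nat) : nat :=
  \max_(0 <= k < (size l).+1 | k <= part l k) k.

(* lambda[i,j] = (lambda_{i+1}-j, ..., lambda_r - j) with non-positive entries removed. *)
Definition shift (l : seq nat) (i j : nat) : seq nat :=
  [seq x - j | x <- drop i l & j < x].

Definition mex (s : seq nat) : nat :=
  let fix go n k := if k is k'.+1 then (if n \in s then go n.+1 k' else n) else n in
  go 0 (size s).+1.

(* Sprague-Grundy value of LCTR position L(mu), computed with fuel. Both moves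
   from a nonempty partition strictly decrease the sum of parts, so fuel
   sumn mu suffices. *)
Fixpoint sg_fuel (n : nat) (mu : seq nat) : nat :=
  match n with
  | 0 => 0
  | n'.+1 => if mu is [::] then 0
             else mex [:: sg_fuel n' (shift mu 1 0); sg_fuel n' (shift mu 0 1)]
  end.

Definition SG (mu : seq nat) : nat := sg_fuel (sumn mu) mu.

Example ex_d : durfee [:: 5; 4; 3; 1] = 3. Proof. by rewrite /durfee unlock. Qed.
Example ex_sh : shift [:: 5; 4; 3; 1] 1 2 = [:: 2; 1]. Proof. by []. Qed.
Example ex_sg0 : SG [:: 1] = 1. Proof. by []. Qed.
Example ex_mex : mex [:: 0; 1] = 2. Proof. by []. Qed.
Example ex_sg2 : SG [:: 2; 2] = 0. Proof. by []. Qed.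

(* Main.v *)
Require Import Defs.
From mathcomp Require Import all_boot zify.
Set Implicit Arguments. Unset Strict Implicit.

Lemma mex2_le a b : mex [:: a; b] <= 2.
Proof. by case: a b => [|[|[|a]]] [|[|[|b]]]. Qed.

Lemma sg_fuel_le2 n mu : sg_fuel n mu <= 2.
Proof. by case: n => [|n] //=; case: mu => // *; apply: mex2_le. Qed.

Lemma SG_le2 mu : SG mu <= 2.
Proof. exact: sg_fuel_le2. Qed.

Definition pos (s : seq nat) := all (fun x => 0 < x) s.

Lemma shift_pos l i j : pos (shift l i j).
Proof. rewrite /pos /shift all_map; apply/allP => x; rewrite mem_filter /= => /andP[h _]; lia. Qed.

Lemma sumn_sh s j : sumn [seq x - j | x <- s & j < x] <= sumn s.
Proof. elim: s => //= x s IH; case: ifP => /= _; lia. Qed.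

Lemma sumn_sh1 x s : 0 < x -> sumn [seq y - 1 | y <- x :: s & 1 < y] < sumn (x :: s).
Proof. move=> hx; have := sumn_sh s 1; rewrite /=; case: ifP => /= _; lia. Qed.

Lemma shift10_sum x s : pos (x :: s) -> sumn (shift (x :: s) 1 0) < sumn (x :: s).
Proof. rewrite /pos /= => /andP[hx _]; have := sumn_sh s 0; rewrite /shift /= drop0; lia. Qed.

Lemma shift01_sum x s : pos (x :: s) -> sumn (shift (x :: s) 0 1) < sumn (x :: s).
Proof. rewrite /pos /= => /andP[hx _]; rewrite /shift drop0; exact: sumn_sh1. Qed.

Lemma pos_nil mu : pos mu -> sumn mu = 0 -> mu = [::].
Proof. case: mu => //= x s /andP[hx _]; lia. Qed.

Lemma sg_fuelS n x s : sg_fuel n.+1 (x :: s) =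
  mex [:: sg_fuel n (shift (x :: s) 1 0); sg_fuel n (shift (x :: s) 0 1)].
Proof. by []. Qed.

Lemma fuel_succ n mu : pos mu -> sumn mu <= n -> sg_fuel n mu = sg_fuel n.+1 mu.
Proof.
elim: n mu => [|n IH] mu hp hs.
  by rewrite (pos_nil hp) //; lia.
case: mu hp hs => [|x s] hp hs //; rewrite !sg_fuelS.
rewrite -!IH //; try exact: shift_pos.
- have := shift01_sum hp; lia.
- have := shift10_sum hp; lia.
Qed.

Lemma fuel_ge n mu : pos mu -> sumn mu <= n -> sg_fuel n mu = SG mu.
Proof.
move=> hp; elim: n => [|n IH] hs.
  by rewrite /SG; have -> : sumn mu = 0 by lia.
case: (ltnP (sumn mu) n.+1) => h.
  by rewrite -fuel_succ // IH.
by rewrite /SG; have -> : sumn mu = n.+1 by lia.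
Qed.

Lemma SG_cons x s : pos (x :: s) ->
  SG (x :: s) = mex [:: SG (shift (x :: s) 1 0); SG (shift (x :: s) 0 1)].
Proof.
move=> hp; rewrite /SG.
have h1 := shift10_sum hp; have h2 := shift01_sum hp.
case E: (sumn (x :: s)) => [|n]; first lia.
rewrite sg_fuelS !fuel_ge //; try exact: shift_pos; lia.
Qed.

Lemma filt_nil s x j : all (fun y => y <= x) s -> x <= j -> [seq y <- s | j < y] = [::].
Proof.
elim: s => //= y s IH /andP[h1 h2] hx.
have : ~~ (j < y) by lia.
by move/negbTE->; rewrite IH.
Qed.

Lemma sh_behead s j : sorted geq s ->
  drop 1 [seq x - j | x <- s & j < x] = [seq x - j | x <- behead s & j < x].
Proof.
case: s => //= x s hs; case: ifP => hx /=; first by rewrite drop0.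
have gt : transitive geq by move=> a b c /=; lia.
have ha := order_path_min gt hs.
rewrite (@filt_nil s x j) //; last by lia.
Qed.

Lemma sh01 l i j : shift (shift l i j) 0 1 = shift l i j.+1.
Proof.
rewrite /shift drop0; elim: (drop i l) => //= x s IH.
case: ifP => h /=.
  have -> : (1 < x - j) = (j.+1 < x) by lia.
  case: ifP => h2 /=; last by [].
  by rewrite IH; congr (_ :: _); lia.
have -> : (j.+1 < x) = false by lia.
exact: IH.
Qed.

Lemma sh10 l i j : sorted geq l -> shift (shift l i j) 1 0 = shift l i.+1 j.
Proof.
move=> hs; rewrite {1}/shift.
have -> : [seq x - 0 | x <- drop 1 (shift l i j) & 0 < x] = drop 1 (shift l i j).
  have hp : all (fun x => 0 < x) (drop 1 (shift l i j)).
    have := shift_pos l i j; rewrite /pos.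
    by case: (shift l i j) => //= x s /andP[_ h]; rewrite drop0.
  rewrite (all_filterP hp).
  by rewrite (eq_map (fun x => subn0 x)) map_id.
rewrite /shift sh_behead; last exact: drop_sorted.
by rewrite !drop_behead iterS.
Qed.

Lemma cell l i j : j < nth 0 l i -> shift l i j = (nth 0 l i - j) :: shift l i.+1 j.
Proof.
move=> h.
have hi : i < size l.
  by rewrite ltnNge; apply/negP => hh; rewrite nth_default in h.
by rewrite /shift (drop_nth 0 hi) /= h.
Qed.

Definition g l i j := SG (shift l i j).

Lemma g_rec l i j : sorted geq l -> j < nth 0 l i ->
  g l i j = mex [:: g l i.+1 j; g l i j.+1].
Proof.
move=> hs h; rewrite /g (cell h) SG_cons; last by rewrite -(cell h); apply: shift_pos.
by rewrite -(cell h) sh10 // sh01.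
Qed.
Definition chk (a0 a1 a2 a3 b0 b1 b2 b3 : nat) : bool :=
  let g33 := mex [:: a3; b3] in
  let g32 := mex [:: a2; g33] in
  let g31 := mex [:: a1; g32] in
  let g30 := mex [:: a0; g31] in
  let g23 := mex [:: g33; b2] in
  let g22 := mex [:: g32; g23] in
  let g21 := mex [:: g31; g22] in
  let g20 := mex [:: g30; g21] in
  let g13 := mex [:: g23; b1] in
  let g12 := mex [:: g22; g13] in
  let g11 := mex [:: g21; g12] in
  let g10 := mex [:: g20; g11] in
  let g03 := mex [:: g13; b0] in
  let g02 := mex [:: g12; g03] in
  let g01 := mex [:: g11; g02] in
  let g00 := mex [:: g10; g01] in
  g00 == g11.
Definition r3 := iota 0 3.
Lemma chk_all : all (fun a0 => all (fun a1 => all (fun a2 => all (fun a3 =>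
  all (fun b0 => all (fun b1 => all (fun b2 => all (fun b3 =>
  chk a0 a1 a2 a3 b0 b1 b2 b3) r3) r3) r3) r3) r3) r3) r3) r3.
Proof. by vm_compute. Qed.
Lemma loc (f : nat -> nat -> nat) :
  (forall i j, i < 4 -> j < 4 -> f i j = mex [:: f i.+1 j; f i j.+1]) ->
  (forall i j, f i j <= 2) -> f 0 0 = f 1 1.
Proof.
move=> e b.
have m x : x <= 2 -> x \in r3 by rewrite mem_iota.
have H : chk (f 4 0) (f 4 1) (f 4 2) (f 4 3) (f 0 4) (f 1 4) (f 2 4) (f 3 4).
  have := chk_all.
  move/allP/(_ _ (m _ (b 4 0))).
  move/allP/(_ _ (m _ (b 4 1))).
  move/allP/(_ _ (m _ (b 4 2))).
  move/allP/(_ _ (m _ (b 4 3))).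
  move/allP/(_ _ (m _ (b 0 4))).
  move/allP/(_ _ (m _ (b 1 4))).
  move/allP/(_ _ (m _ (b 2 4))).
  move/allP/(_ _ (m _ (b 3 4))).
  done.
have e00 := e 0 0 isT isT. have e01 := e 0 1 isT isT. have e02 := e 0 2 isT isT. have e03 := e 0 3 isT isT.
have e10 := e 1 0 isT isT. have e11 := e 1 1 isT isT. have e12 := e 1 2 isT isT. have e13 := e 1 3 isT isT.
have e20 := e 2 0 isT isT. have e21 := e 2 1 isT isT. have e22 := e 2 2 isT isT. have e23 := e 2 3 isT isT.
have e30 := e 3 0 isT isT. have e31 := e 3 1 isT isT. have e32 := e 3 2 isT isT. have e33 := e 3 3 isT isT.
rewrite /chk in H; cbv zeta in H.
rewrite -e33 -e32 -e31 -e30 -e23 -e22 -e21 -e20 -e13 -e12 -e11 -e10 -e03 -e02 -e01 -e00 in H.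
exact/eqP.
Qed.

Lemma nth_mono l i k : sorted geq l -> i <= k -> nth 0 l k <= nth 0 l i.
Proof.
move=> hs hik; case: (ltnP k (size l)) => hk; last by rewrite nth_default.
have gt : transitive geq by move=> a b c /=; lia.
have rf : reflexive geq by move=> a /=.
have := sorted_leq_nth gt rf 0 hs; move/(_ i k) => /=.
by apply => //; rewrite inE; lia.
Qed.

Lemma diag l k : sorted geq l -> k + 3 < nth 0 l (k + 3) -> g l k k = g l k.+1 k.+1.
Proof.
move=> hs hc.
have := @loc (fun i j => g l (k + i) (k + j)).
rewrite !addn0 !addn1; apply.
  move=> i j hi hj /=; rewrite !addnS; apply: g_rec => //.
  have := @nth_mono l (k + i) (k + 3) hs; lia.
by move=> i j; apply: SG_le2.
Qed.

Lemma durfee_ok l : durfee l <= part l (durfee l).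
Proof.
rewrite /durfee; apply: (big_ind (fun x => x <= part l x)) => //.
move=> x y hx hy; rewrite /maxn; by case: ifP.
Qed.

Lemma shift00 l : is_partition l -> shift l 0 0 = l.
Proof.
case/andP=> _ hp; rewrite /shift drop0 (all_filterP hp).
by rewrite (eq_map (fun x => subn0 x)) map_id.
Qed.

Theorem mainTheorem11 (lam : seq nat) :
  is_partition lam -> 3 <= durfee lam ->
  let l := durfee lam - 3 in
  SG lam = SG (shift lam l l).
Proof.
move=> hp hd l.
have hs : sorted geq lam by case/andP: hp.
have hd' := durfee_ok lam; rewrite /part in hd'.
have key : forall k, k <= l -> g lam 0 0 = g lam k k.
  elim => // k IH hk; rewrite IH ?(ltnW hk) //; apply: diag => //.
  have := @nth_mono lam (k + 3) (durfee lam).-1 hs; rewrite /l in hk; lia.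
by have := key l (leqnn l); rewrite /g shift00.
Qed.
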